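(* Let $A\in\mathcal{M}_n(\mathbb{H})$ be an upper triangular nilpotent matrix that is cycle-free. Then $W(A)$ is a closed disk $\mathbb{D}_{\mathbb{H}}(0,r)$ centered at the origin, for some $r\ge0$.
   Context: $\mathbb{H}$ denotes the real quaternions. The numerical range of $A\in\mathcal{M}_n(\mathbb{H})$ is $W(A)=\{\mathbf{x}^*A\mathbf{x}:\mathbf{x}\in\mathbb{H}^n,\ \mathbf{x}^*\mathbf{x}=1\}$. $\mathbb{D}_{\mathbb{H}}(c,r)=\{q\in\mathbb{H}:|q-c|\le r\}$. The graph $\mathcal{G}_A$ of $A=[a_{ij}]$ is the undirected graph on $\{1,\dots,n\}$ with an edge between $i$ and $j$ (a loop if $i=j$) whenever $a_{ij}\ne0$ or $a_{ji}\ne0$; $A$ is cycle-free if $\mathcal{G}_A$ contains no cycle (loops count as cycles). *)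

(* Defs.v *)
From Stdlib Require Import Reals List.
Import ListNotations.
Open Scope R_scope.

Record quat : Type := mkQ { qre : R; qi : R; qj : R; qk : R }.

Definition qzero : quat := mkQ 0 0 0 0.
Definition qone : quat := mkQ 1 0 0 0.
Definition qadd (p q : quat) : quat :=
  mkQ (qre p + qre q) (qi p + qi q) (qj p + qj q) (qk p + qk q).
Definition qsub (p q : quat) : quat :=
  mkQ (qre p - qre q) (qi p - qi q) (qj p - qj q) (qk p - qk q).
Definition qmul (p q : quat) : quat :=
  mkQ (qre p * qre q - qi p * qi q - qj p * qj q - qk p * qk q)
      (qre p * qi q + qi p * qre q + qj p * qk q - qk p * qj q)
      (qre p * qj q - qi p * qk q + qj p * qre q + qk p * qi q)
      (qre p * qk q + qi p * qj q - qj p * qi q + qk p * qre q).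
Definition qconj (q : quat) : quat := mkQ (qre q) (- qi q) (- qj q) (- qk q).
Definition qnorm (q : quat) : R :=
  sqrt (qre q * qre q + qi q * qi q + qj q * qj q + qk q * qk q).

Fixpoint qsum (n : nat) (f : nat -> quat) : quat :=
  match n with
  | O => qzero
  | S m => qadd (qsum m f) (f m)
  end.

(** Vectors in H^n and matrices in M_n(H): only indices < n are relevant. *)
Definition qvec := nat -> quat.
Definition qmat := nat -> nat -> quat.

Definition qdot (n : nat) (x y : qvec) : quat :=
  qsum n (fun i => qmul (qconj (x i)) (y i)).

Definition qmatvec (n : nat) (A : qmat) (x : qvec) : qvec :=
  fun i => qsum n (fun j => qmul (A i j) (x j)).

Definition qmatmul (n : nat) (A B : qmat) : qmat :=
  fun i j => qsum n (fun l => qmul (A i l) (B l j)).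

Definition qmat1 : qmat := fun i j => if Nat.eqb i j then qone else qzero.

Fixpoint qmatpow (n : nat) (A : qmat) (k : nat) : qmat :=
  match k with
  | O => qmat1
  | S k' => qmatmul n A (qmatpow n A k')
  end.

Definition numrange (n : nat) (A : qmat) (q : quat) : Prop :=
  exists x : qvec, qdot n x x = qone /\ q = qdot n x (qmatvec n A x).

Definition qdisk (c : quat) (r : R) (q : quat) : Prop := qnorm (qsub q c) <= r.

Definition upper_triangular (n : nat) (A : qmat) : Prop :=
  forall i j, (i < n)%nat -> (j < n)%nat -> (j < i)%nat -> A i j = qzero.

Definition nilpotent (n : nat) (A : qmat) : Prop :=
  exists k : nat, forall i j, (i < n)%nat -> (j < n)%nat -> qmatpow n A k i j = qzero.

(** Graph G_A on {0,...,n-1}: i ~ j iff a_ij <> 0 or a_ji <> 0 (i = j gives a loop). *)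
Definition gadj (A : qmat) (i j : nat) : Prop := A i j <> qzero \/ A j i <> qzero.

Definition has_long_cycle (n : nat) (A : qmat) : Prop :=
  exists l : list nat,
    (3 <= length l)%nat /\ NoDup l /\ Forall (fun v => (v < n)%nat) l /\
    forall k, (k < length l)%nat ->
      gadj A (nth k l O) (nth (S k mod length l) l O).

Definition cycle_free (n : nat) (A : qmat) : Prop :=
  (forall i, (i < n)%nat -> ~ gadj A i i) /\ ~ has_long_cycle n A.

(* Main.v *)
Require Import Defs.
From Stdlib Require Import Reals List Lia Lra Classical FunctionalExtensionality Arith Wf_nat.
From mathcomp Require all_boot all_order all_algebra all_classical all_reals all_analysis lra Rstruct Rstruct_topology.
Open Scope R_scope.

Definition Nq (q : quat) : R := qre q * qre q + qi q * qi q + qj q * qj q + qk q * qk q.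
Definition qscale (c : R) (q : quat) : quat := mkQ (c * qre q) (c * qi q) (c * qj q) (c * qk q).

Lemma quat_eq (p q : quat) : qre p = qre q -> qi p = qi q -> qj p = qj q -> qk p = qk q -> p = q.
Proof. destruct p, q; simpl; intros; subst; reflexivity. Qed.

Ltac qsolve := apply quat_eq; simpl; ring.

Lemma Nq_ge0 q : 0 <= Nq q.
Proof. unfold Nq; nra. Qed.

Lemma qnorm_sq q : qnorm q * qnorm q = Nq q.
Proof. unfold qnorm; apply sqrt_sqrt; apply Nq_ge0. Qed.

Lemma qnorm_ge0 q : 0 <= qnorm q.
Proof. unfold qnorm; apply sqrt_pos. Qed.

Lemma Nq_mul p q : Nq (qmul p q) = Nq p * Nq q.
Proof. destruct p, q; unfold Nq; simpl; ring. Qed.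

Lemma qnorm_mul p q : qnorm (qmul p q) = qnorm p * qnorm q.
Proof. unfold qnorm; fold (Nq (qmul p q)); fold (Nq p); fold (Nq q).
rewrite Nq_mul; apply sqrt_mult; apply Nq_ge0. Qed.

Lemma Nq_conj q : Nq (qconj q) = Nq q.
Proof. destruct q; unfold Nq; simpl; ring. Qed.

Lemma qnorm_conj q : qnorm (qconj q) = qnorm q.
Proof. unfold qnorm; fold (Nq (qconj q)); fold (Nq q); rewrite Nq_conj; auto. Qed.

Lemma qnorm_Nq q : qnorm q = sqrt (Nq q).
Proof. reflexivity. Qed.

Lemma qnorm_add p q : qnorm (qadd p q) <= qnorm p + qnorm q.
Proof.
  assert (hp := qnorm_ge0 p). assert (hq := qnorm_ge0 q). assert (hs := qnorm_ge0 (qadd p q)).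
  apply Rsqr_incr_0_var; [|lra]. unfold Rsqr.
  rewrite qnorm_sq.
  assert (Hd : qre p * qre q + qi p * qi q + qj p * qj q + qk p * qk q <= qnorm p * qnorm q).
  { set (d := qre p * qre q + qi p * qi q + qj p * qj q + qk p * qk q).
    destruct (Rle_dec d 0). { nra. }
    apply Rsqr_incr_0_var; [|nra]. unfold Rsqr.
    replace (qnorm p * qnorm q * (qnorm p * qnorm q)) with ((qnorm p * qnorm p) * (qnorm q * qnorm q)) by ring.
    rewrite !qnorm_sq. unfold d, Nq; destruct p as [a1 a2 a3 a4], q as [b1 b2 b3 b4]; simpl.
    assert (0 <= (a1*b2-a2*b1)^2 + (a1*b3-a3*b1)^2 + (a1*b4-a4*b1)^2 + (a2*b3-a3*b2)^2 + (a2*b4-a4*b2)^2 + (a3*b4-a4*b3)^2) by (repeat apply Rplus_le_le_0_compat; apply pow2_ge_0).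
    nra. }
  replace ((qnorm p + qnorm q) * (qnorm p + qnorm q)) with (qnorm p * qnorm p + qnorm q * qnorm q + 2 * (qnorm p * qnorm q)) by ring.
  rewrite !qnorm_sq. unfold Nq in *; destruct p, q; simpl in *. nra.
Qed.

Lemma qnorm_zero : qnorm qzero = 0.
Proof. unfold qnorm, qzero; simpl. replace (0*0+0*0+0*0+0*0) with 0 by ring. apply sqrt_0. Qed.

Lemma Nq_zero_eq q : Nq q = 0 -> q = qzero.
Proof. destruct q; unfold Nq; simpl; intros; apply quat_eq; simpl; nra. Qed.

Lemma qnorm_pos q : q <> qzero -> 0 < qnorm q.
Proof. intros H. assert (h := qnorm_ge0 q). destruct (Req_dec (qnorm q) 0) as [e|]; [|lra].
  exfalso; apply H, Nq_zero_eq. rewrite <- qnorm_sq, e; ring. Qed.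
Fixpoint rsum (n : nat) (f : nat -> R) : R :=
  match n with O => 0 | S m => rsum m f + f m end.

Lemma rsum_ext n f g : (forall i, (i < n)%nat -> f i = g i) -> rsum n f = rsum n g.
Proof. induction n; simpl; intros H; auto. rewrite IHn by (intros; apply H; lia). rewrite H by lia; auto. Qed.

Lemma qsum_ext n f g : (forall i, (i < n)%nat -> f i = g i) -> qsum n f = qsum n g.
Proof. induction n; simpl; intros H; auto. rewrite IHn by (intros; apply H; lia). rewrite H by lia; auto. Qed.

Lemma rsum_scal n c f : rsum n (fun i => c * f i) = c * rsum n f.
Proof. induction n; simpl. ring. rewrite IHn; ring. Qed.

Lemma rsum_zero n f : (forall i, (i < n)%nat -> f i = 0) -> rsum n f = 0.
Proof. intros H; rewrite (rsum_ext n f (fun i => 0 * 0)) by (intros; rewrite H; auto; ring).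
  rewrite rsum_scal; ring. Qed.

Lemma rsum_le n f g : (forall i, (i < n)%nat -> f i <= g i) -> rsum n f <= rsum n g.
Proof. induction n; simpl; intros H. lra. assert (H1 := H n ltac:(lia)).
  assert (rsum n f <= rsum n g) by (apply IHn; intros; apply H; lia). lra. Qed.

Lemma rsum_ge0 n f : (forall i, (i < n)%nat -> 0 <= f i) -> 0 <= rsum n f.
Proof. intros H. rewrite <- (rsum_zero n (fun _ => 0)) by auto. apply rsum_le; auto. Qed.

Lemma rsum_ge_term n f k : (forall i, (i < n)%nat -> 0 <= f i) -> (k < n)%nat -> f k <= rsum n f.
Proof. induction n; simpl; intros H Hk. lia.
  assert (0 <= rsum n f) by (apply rsum_ge0; intros; apply H; lia).
  destruct (Nat.eq_dec k n). subst; lra.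
  assert (f k <= rsum n f) by (apply IHn; [intros; apply H; lia|lia]).
  assert (0 <= f n) by (apply H; lia). lra. Qed.

Lemma rsum_delta0 m : rsum (S m) (fun i => if Nat.eqb i 0 then 1 else 0) = 1.
Proof. induction m; simpl in *. ring. rewrite IHm. ring. Qed.

Lemma qsum_scale n c u : qsum n (fun i => qscale (c i) u) = qscale (rsum n c) u.
Proof. induction n; simpl. qsolve. rewrite IHn. qsolve. Qed.

Lemma qmul_sum_r n p f : qmul p (qsum n f) = qsum n (fun j => qmul p (f j)).
Proof. induction n; simpl. qsolve. rewrite <- IHn. destruct p; qsolve. Qed.

Lemma qre_sum n f : qre (qsum n f) = rsum n (fun i => qre (f i)).
Proof. induction n; simpl; auto. rewrite IHn; auto. Qed.

Lemma qnorm_sum n f : qnorm (qsum n f) <= rsum n (fun i => qnorm (f i)).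
Proof. induction n; simpl. rewrite qnorm_zero; lra.
  eapply Rle_trans. apply qnorm_add. lra. Qed.
Definition Qf (n : nat) (b : nat -> nat -> R) (y : nat -> R) : R :=
  rsum n (fun i => rsum n (fun j => b i j * y i * y j)).

Lemma unit_abs n x : qdot n x x = qone -> rsum n (fun i => qnorm (x i) * qnorm (x i)) = 1.
Proof. intros H. assert (E := f_equal qre H). unfold qdot in E. rewrite qre_sum in E. simpl in E.
  rewrite <- E. apply rsum_ext; intros i _. rewrite qnorm_sq. unfold Nq. destruct (x i); simpl; ring. Qed.

Lemma bound_W n A x : qnorm (qdot n x (qmatvec n A x)) <= Qf n (fun i j => qnorm (A i j)) (fun i => qnorm (x i)).
Proof.
  unfold qdot, qmatvec, Qf. eapply Rle_trans. apply qnorm_sum.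
  apply rsum_le; intros i _. rewrite qnorm_mul, qnorm_conj.
  eapply Rle_trans. apply Rmult_le_compat_l. apply qnorm_ge0. apply qnorm_sum.
  rewrite <- rsum_scal. apply Req_le, rsum_ext; intros j _. rewrite qnorm_mul. ring.
Qed.
Lemma rsum_cont n (g : nat -> R -> R) : (forall i, continuity (g i)) -> continuity (fun t => rsum n (fun i => g i t)).
Proof. intros H; induction n; simpl.
  - apply continuity_const. intros x y; reflexivity.
  - apply (continuity_plus (fun t => rsum n (fun i => g i t)) (g n)); auto. Qed.

Lemma cont_affine c d : continuity (fun t => (1 - t) * c + t * d).
Proof.
  assert (Hid : continuity (fun t => t)) by exact (derivable_continuous _ derivable_id).
  assert (Hc : forall k, continuity (fun _ => k)) by (intros k; apply continuity_const; intros x y; reflexivity).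
  apply (continuity_plus (fun t => (1 - t) * c) (fun t => t * d)).
  - apply (continuity_mult (fun t => 1 - t) (fun _ => c)); auto.
    apply (continuity_minus (fun _ => 1) (fun t => t)); auto.
  - apply (continuity_mult (fun t => t) (fun _ => d)); auto. Qed.

Lemma ivt01 F : continuity F -> F 0 <= 0 -> 0 <= F 1 -> exists t, 0 <= t <= 1 /\ F t = 0.
Proof. intros Hc H0 H1.
  destruct (Req_dec (F 0) 0). exists 0; split; [lra|auto].
  destruct (Req_dec (F 1) 0). exists 1; split; [lra|auto].
  destruct (IVT F 0 1 Hc ltac:(lra) ltac:(lra) ltac:(lra)) as [t [Ht Ft]]. exists t; auto. Qed.

Lemma Qf_scale n b y c : Qf n b (fun i => y i * c) = c * c * Qf n b y.
Proof. unfold Qf. rewrite <- rsum_scal. apply rsum_ext; intros i _.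
  rewrite <- rsum_scal. apply rsum_ext; intros j _. ring. Qed.

Lemma path_value n b (hn : (0 < n)%nat) (b00 : b 0%nat 0%nat = 0) y0
  (y0nn : forall i, 0 <= y0 i) (y0u : rsum n (fun i => y0 i * y0 i) = 1)
  rho (h0 : 0 <= rho) (h1 : rho <= Qf n b y0) :
  exists y, rsum n (fun i => y i * y i) = 1 /\ Qf n b y = rho.
Proof.
  destruct n as [|m]; [lia|].
  set (v := fun t i => (1 - t) * (if Nat.eqb i 0 then 1 else 0) + t * y0 i).
  set (F := fun t => Qf (S m) b (v t) - rho * rsum (S m) (fun i => v t i * v t i)).
  assert (Hv : forall i, continuity (fun t => v t i)) by (intros i; apply cont_affine).
  assert (HF : continuity F).
  { apply (continuity_minus (fun t => Qf (S m) b (v t)) (fun t => rho * rsum (S m) (fun i => v t i * v t i))).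
    - unfold Qf. apply (rsum_cont (S m) (fun i t => rsum (S m) (fun j => b i j * v t i * v t j))).
      intros i. apply (rsum_cont (S m) (fun j t => b i j * v t i * v t j)). intros j.
      apply (continuity_mult (fun t => b i j * v t i) (fun t => v t j)); auto.
      apply (continuity_mult (fun t => b i j) (fun t => v t i)); auto.
      apply continuity_const; intros x y; reflexivity.
    - apply (continuity_mult (fun _ => rho) (fun t => rsum (S m) (fun i => v t i * v t i))).
      apply continuity_const; intros x y; reflexivity.
      apply (rsum_cont (S m) (fun i t => v t i * v t i)). intros i.
      apply (continuity_mult (fun t => v t i) (fun t => v t i)); auto. }
  assert (Hv0 : v 0 = fun i => if Nat.eqb i 0 then 1 else 0).
  { extensionality i. unfold v. ring. }
  assert (Hv1 : v 1 = y0). { extensionality i. unfold v. ring. }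
  destruct (ivt01 F HF) as [t [Ht Ft]].
  - unfold F. rewrite Hv0.
    assert (Qf (S m) b (fun i => if Nat.eqb i 0 then 1 else 0) = 0).
    { unfold Qf. apply rsum_zero; intros i _. apply rsum_zero; intros j _.
      destruct (Nat.eqb i 0) eqn:Ei; [|ring]. destruct (Nat.eqb j 0) eqn:Ej; [|ring].
      apply Nat.eqb_eq in Ei; apply Nat.eqb_eq in Ej; rewrite Ei, Ej, b00; ring. }
    assert (rsum (S m) (fun i => (if Nat.eqb i 0 then 1 else 0) * (if Nat.eqb i 0 then 1 else 0)) = 1).
    { rewrite (rsum_ext _ _ (fun i => if Nat.eqb i 0 then 1 else 0)). apply rsum_delta0. intros i _. destruct (Nat.eqb i 0); simpl; ring. }
    nra.
  - unfold F. rewrite Hv1, y0u. lra.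
  - set (N := rsum (S m) (fun i => v t i * v t i)).
    assert (HN : 0 < N).
    { destruct (Req_dec t 1) as [e|ne].
      - unfold N. rewrite e, Hv1, y0u. lra.
      - assert (v t 0%nat * v t 0%nat <= N).
        { unfold N. apply (rsum_ge_term (S m) (fun i => v t i * v t i)); [|lia]. intros; nra. }
        assert (v t 0%nat >= 1 - t) by (change (v t 0%nat) with ((1 - t) * (if Nat.eqb 0 0 then 1 else 0) + t * y0 0%nat); simpl; assert (0 <= y0 0%nat) by auto; nra).
        nra. }
    exists (fun i => v t i * / sqrt N). split.
    + rewrite (rsum_ext _ _ (fun i => (/ sqrt N * / sqrt N) * (v t i * v t i))) by (intros; ring).
      rewrite rsum_scal. fold N. rewrite <- Rinv_mult, sqrt_sqrt by lra. field. lra.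
    + rewrite Qf_scale. rewrite <- Rinv_mult, sqrt_sqrt by lra.
      unfold F in Ft. fold N in Ft. assert (Qf (S m) b (v t) = rho * N) by lra.
      rewrite H. field. lra.
Qed.
Definition qpath (n : nat) (A : qmat) (l : list nat) : Prop :=
  NoDup l /\ Forall (fun v => (v < n)%nat) l /\
  forall k, (S k < length l)%nat -> gadj A (nth k l O) (nth (S k) l O).

Lemma gadj_sym A i j : gadj A i j -> gadj A j i.
Proof. unfold gadj; tauto. Qed.

Lemma qpath_len n A l : qpath n A l -> (length l <= n)%nat.
Proof. intros [Hnd [Hf _]]. rewrite <- (length_seq n 0).
  apply NoDup_incl_length; auto. intros x Hx. apply in_seq.
  rewrite Forall_forall in Hf. specialize (Hf x Hx). lia. Qed.

Lemma max_exists (P : nat -> Prop) n : (forall m, P m -> (m <= n)%nat) ->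
  forall m0, P m0 -> exists m, P m /\ forall m', P m' -> (m' <= m)%nat.
Proof.
  intros Hb. assert (G : forall k m0, (n - m0 = k)%nat -> P m0 -> exists m, P m /\ forall m', P m' -> (m' <= m)%nat).
  { intros k. induction k as [k IH] using (well_founded_induction lt_wf). intros m0 Hk H0.
    destruct (classic (exists m', P m' /\ (m0 < m')%nat)) as [[m' [H1 H2]]|Hn].
    - assert (m' <= n)%nat by auto. apply (IH (n - m')%nat) with m'; auto; lia.
    - exists m0. split; auto. intros m' Hm'. destruct (le_lt_dec m' m0); auto.
      exfalso; apply Hn; eauto. }
  intros m0 H0. eapply G; eauto.
Qed.

Lemma in_firstn_in {X} k (l : list X) x : In x (firstn k l) -> In x l.
Proof. intros H. rewrite <- (firstn_skipn k l). apply in_or_app; auto. Qed.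

Lemma leaf_exists n A : (forall i, (i < n)%nat -> ~ gadj A i i) -> ~ has_long_cycle n A ->
  (exists i j, (i < n)%nat /\ (j < n)%nat /\ A i j <> qzero) ->
  exists v p, (v < n)%nat /\ (p < n)%nat /\ gadj A v p /\
    forall w, (w < n)%nat -> gadj A v w -> w = p.
Proof.
  intros Hloop Hcyc [i [j [Hi [Hj Hij]]]].
  assert (Hne : i <> j). { intros e. subst j. apply (Hloop i Hi). left; auto. }
  set (P := fun m => exists l, qpath n A l /\ length l = m /\ (2 <= m)%nat).
  assert (HP0 : P 2%nat).
  { exists (i :: j :: nil). split; [|split; auto]. split; [|split].
    - constructor. simpl; intuition. constructor; auto. constructor.
    - repeat constructor; auto.
    - intros k Hk. simpl in Hk. destruct k; [|lia]. simpl. left; auto. }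
  destruct (max_exists P n) with (m0 := 2%nat) as [m [[l [Hl [Hlen H2]]] Hmax]]; auto.
  { intros m' [l' [Hl' [Hlen' _]]]. subst m'. eapply qpath_len; eauto. }
  destruct l as [|v [|p rest]]; simpl in Hlen; try lia.
  destruct Hl as [Hnd [Hf Hadj]].
  rewrite Forall_forall in Hf.
  assert (Hv : (v < n)%nat) by (apply Hf; simpl; auto).
  assert (Hp : (p < n)%nat) by (apply Hf; simpl; auto).
  exists v, p. split; [auto|split; [auto|split]].
  - apply (Hadj 0%nat). simpl; lia.
  - intros w Hw Hg. destruct (Nat.eq_dec w p) as [|Hwp]; auto. exfalso.
    set (l := v :: p :: rest) in *.
    destruct (In_dec Nat.eq_dec w l) as [Hin|Hnin].
    + destruct (In_nth l w 0%nat Hin) as [k [Hk Hkw]].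
      destruct k as [|[|k]].
      * simpl in Hkw. subst w. apply (Hloop v Hv Hg).
      * simpl in Hkw. auto.
      * apply Hcyc. exists (firstn (S (S (S k))) l).
        assert (Hc : length (firstn (S (S (S k))) l) = S (S (S k))) by (apply firstn_length_le; lia).
        split; [lia|split; [|split]].
        -- rewrite <- (firstn_skipn (S (S (S k))) l) in Hnd. eapply NoDup_app_remove_r; eauto.
        -- rewrite Forall_forall. intros x Hx. apply Hf. eapply in_firstn_in; eauto.
        -- rewrite Hc. intros idx Hidx.
           rewrite !nth_firstn.
           destruct (Nat.eq_dec idx (S (S k))) as [e|ne].
           ++ subst idx. rewrite Nat.Div0.mod_same. simpl (0 <? _)%nat.
              replace ((S (S k)) <? S (S (S k)))%nat with true by (symmetry; apply Nat.ltb_lt; lia).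
              rewrite Hkw. simpl (nth 0 l 0%nat). apply gadj_sym; auto.
           ++ rewrite Nat.mod_small by lia.
              replace (idx <? S (S (S k)))%nat with true by (symmetry; apply Nat.ltb_lt; lia).
              replace (S idx <? S (S (S k)))%nat with true by (symmetry; apply Nat.ltb_lt; lia).
              apply Hadj. lia.
    + assert (HP : P (S m)).
      { exists (w :: l). split; [|split; [simpl; lia|lia]]. split; [|split].
        - constructor; auto.
        - constructor; auto. rewrite Forall_forall; auto.
        - intros k Hk. destruct k as [|k].
          + simpl. apply gadj_sym; auto.
          + simpl. apply Hadj. simpl in Hk |- *. lia. }
      specialize (Hmax _ HP). lia.
Qed.
Lemma key1 a d u : qmul (qmul (qconj (qmul (qmul a d) (qconj u))) a) d = qscale (Nq a * Nq d) u.
Proof. destruct a, d, u; unfold Nq; qsolve. Qed.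

Lemma key2 a d u : qmul (qmul (qconj d) a) (qmul (qmul (qconj a) d) u) = qscale (Nq a * Nq d) u.
Proof. destruct a, d, u; unfold Nq; qsolve. Qed.

Lemma Nq_scale c p : Nq (qscale c p) = c * c * Nq p.
Proof. destruct p; unfold Nq; simpl; ring. Qed.

Lemma fix1 a d u : a <> qzero -> Nq d = 1 ->
  qmul (qmul (qconj (qscale (/ qnorm a) (qmul (qmul a d) (qconj u)))) a) d = qscale (qnorm a) u.
Proof. intros Ha Hd. assert (hs := qnorm_pos a Ha).
  transitivity (qscale (/ qnorm a) (qmul (qmul (qconj (qmul (qmul a d) (qconj u))) a) d)).
  { destruct a, d, u; qsolve. }
  rewrite key1, Hd, <- qnorm_sq. destruct u; apply quat_eq; simpl; field; lra. Qed.

Lemma fix2 a d u : a <> qzero -> Nq d = 1 ->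
  qmul (qmul (qconj d) a) (qscale (/ qnorm a) (qmul (qmul (qconj a) d) u)) = qscale (qnorm a) u.
Proof. intros Ha Hd. assert (hs := qnorm_pos a Ha).
  transitivity (qscale (/ qnorm a) (qmul (qmul (qconj d) a) (qmul (qmul (qconj a) d) u))).
  { destruct a, d, u; qsolve. }
  rewrite key2, Hd, <- qnorm_sq. destruct u; apply quat_eq; simpl; field; lra. Qed.

Lemma Nfix1 a d u : a <> qzero -> Nq d = 1 -> Nq u = 1 ->
  Nq (qscale (/ qnorm a) (qmul (qmul a d) (qconj u))) = 1.
Proof. intros Ha Hd Hu. assert (hs := qnorm_pos a Ha).
  rewrite Nq_scale, !Nq_mul, Nq_conj, Hd, Hu, <- qnorm_sq. field; lra. Qed.

Lemma Nfix2 a d u : a <> qzero -> Nq d = 1 -> Nq u = 1 ->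
  Nq (qscale (/ qnorm a) (qmul (qmul (qconj a) d) u)) = 1.
Proof. intros Ha Hd Hu. assert (hs := qnorm_pos a Ha).
  rewrite Nq_scale, !Nq_mul, Nq_conj, Hd, Hu, <- qnorm_sq. field; lra. Qed.

Lemma Nq_one : Nq qone = 1.
Proof. unfold Nq, qone; simpl; ring. Qed.

Lemma cycle_mono n A B : (forall i j, gadj B i j -> gadj A i j) -> has_long_cycle n B -> has_long_cycle n A.
Proof. intros H [l [H1 [H2 [H3 H4]]]]. exists l; repeat split; auto. Qed.

Lemma labeling n u (Nu : Nq u = 1) : forall k A L, (length L <= k)%nat ->
  (forall i j, (i < n)%nat -> (j < n)%nat -> A i j <> qzero -> In i L /\ In j L) ->
  upper_triangular n A -> cycle_free n A ->
  exists d : nat -> quat, (forall i, Nq (d i) = 1) /\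
    forall i j, (i < n)%nat -> (j < n)%nat -> A i j <> qzero ->
      qmul (qmul (qconj (d i)) (A i j)) (d j) = qscale (qnorm (A i j)) u.
Proof.
  induction k; intros A L HL Hcov Hut [Hloop Hcyc];
  (destruct (classic (exists i j, (i < n)%nat /\ (j < n)%nat /\ A i j <> qzero)) as [He|Hne];
   [|exists (fun _ => qone); split; [intros; apply Nq_one|intros i j Hi Hj Ha; exfalso; apply Hne; eauto]]).
  - destruct He as [i [j [Hi [Hj Ha]]]]. destruct (Hcov i j Hi Hj Ha) as [Hin _].
    destruct L; simpl in *; [contradiction|lia].
  - destruct (leaf_exists n A Hloop Hcyc He) as [v [p [Hv [Hp [Hvp Huniq]]]]].
    assert (Hpv : p <> v). { intros e. rewrite e in Hvp. exact (Hloop v Hv Hvp). }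
    set (A' := fun i j => if orb (Nat.eqb i v) (Nat.eqb j v) then qzero else A i j).
    assert (HA'g : forall i j, gadj A' i j -> gadj A i j).
    { intros i j [H|H]; unfold A' in H.
      - left. destruct (orb _ _); [contradiction|auto].
      - right. destruct (orb _ _); [contradiction|auto]. }
    assert (HinvL : In v L).
    { destruct Hvp as [H|H]. apply (Hcov v p Hv Hp H). apply (Hcov p v Hp Hv H). }
    destruct (IHk A' (remove Nat.eq_dec v L)) as [d' [Hd'1 Hd'2]].
    + assert (Hlt := remove_length_lt Nat.eq_dec L v HinvL). lia.
    + intros i j Hi Hj Ha. unfold A' in Ha.
      destruct (Nat.eqb i v) eqn:Ei; simpl in Ha; [contradiction|].
      destruct (Nat.eqb j v) eqn:Ej; simpl in Ha; [contradiction|].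
      apply Nat.eqb_neq in Ei; apply Nat.eqb_neq in Ej.
      destruct (Hcov i j Hi Hj Ha). split; apply in_in_remove; auto.
    + intros i j Hi Hj Hji. unfold A'. destruct (orb _ _); auto.
    + split. intros i Hi Hg. exact (Hloop i Hi (HA'g i i Hg)).
      intros Hc; apply Hcyc. eapply cycle_mono; eauto.
    + destruct (classic (A v p = qzero)) as [Hz|Hnz].
      * assert (Hpv' : A p v <> qzero) by (destruct Hvp; [contradiction|auto]).
        set (dv := qscale (/ qnorm (A p v)) (qmul (qmul (qconj (A p v)) (d' p)) u)).
        exists (fun i => if Nat.eqb i v then dv else d' i). split.
        { intros i. destruct (Nat.eqb i v). apply Nfix2; auto. auto. }
        intros i j Hi Hj Ha.
        destruct (Nat.eqb i v) eqn:Ei.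
        { apply Nat.eqb_eq in Ei. rewrite Ei in Ha.
          assert (j = p) by (apply Huniq; auto; left; auto). subst j. contradiction. }
        destruct (Nat.eqb j v) eqn:Ej.
        { apply Nat.eqb_eq in Ej. rewrite Ej in Ha.
          assert (i = p) by (apply Huniq; auto; right; auto). subst i. rewrite Ej.
          apply fix2; auto. }
        assert (E : A' i j = A i j) by (unfold A'; rewrite Ei, Ej; reflexivity).
        rewrite <- E. apply Hd'2; auto. rewrite E; auto.
      * set (dv := qscale (/ qnorm (A v p)) (qmul (qmul (A v p) (d' p)) (qconj u))).
        exists (fun i => if Nat.eqb i v then dv else d' i). split.
        { intros i. destruct (Nat.eqb i v). apply Nfix1; auto. auto. }
        intros i j Hi Hj Ha.
        destruct (Nat.eqb i v) eqn:Ei.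
        { apply Nat.eqb_eq in Ei. rewrite Ei in Ha |- *.
          assert (j = p) by (apply Huniq; auto; left; auto). subst j.
          replace (Nat.eqb p v) with false by (symmetry; apply Nat.eqb_neq; auto).
          apply fix1; auto. }
        destruct (Nat.eqb j v) eqn:Ej.
        { apply Nat.eqb_eq in Ej. rewrite Ej in Ha.
          assert (i = p) by (apply Huniq; auto; right; auto). subst i.
          exfalso. destruct (Nat.lt_ge_cases v p).
          - apply Ha. apply Hut; auto.
          - apply Hnz. apply Hut; auto. lia. }
        assert (E : A' i j = A i j) by (unfold A'; rewrite Ei, Ej; reflexivity).
        rewrite <- E. apply Hd'2; auto. rewrite E; auto.
Qed.
Lemma construct n A (hut : upper_triangular n A) (hcf : cycle_free n A) y u (Nu : Nq u = 1)
  (yu : rsum n (fun i => y i * y i) = 1) :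
  exists x, qdot n x x = qone /\
    qdot n x (qmatvec n A x) = qscale (Qf n (fun i j => qnorm (A i j)) y) u.
Proof.
  destruct (labeling n u Nu n A (seq 0 n)) as [d [Hd1 Hd2]]; auto.
  { rewrite length_seq; auto. }
  { intros i j Hi Hj _. split; apply in_seq; lia. }
  exists (fun i => qscale (y i) (d i)). split.
  - unfold qdot. rewrite (qsum_ext _ _ (fun i => qscale (y i * y i) qone)).
    + rewrite qsum_scale, yu. qsolve.
    + intros i _. transitivity (qscale (y i * y i * Nq (d i)) qone).
      { destruct (d i); unfold Nq; qsolve. }
      rewrite Hd1. f_equal; ring.
  - unfold qdot, qmatvec, Qf.
    rewrite (qsum_ext _ _ (fun i => qscale (rsum n (fun j => qnorm (A i j) * y i * y j)) u)).
    + apply qsum_scale.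
    + intros i Hi. rewrite qmul_sum_r, <- qsum_scale. apply qsum_ext; intros j Hj.
      transitivity (qscale (y i * y j) (qmul (qmul (qconj (d i)) (A i j)) (d j))).
      { destruct (d i), (d j), (A i j); qsolve. }
      destruct (classic (A i j = qzero)) as [Hz|Hnz].
      * rewrite Hz, qnorm_zero. destruct (d i), (d j), u; qsolve.
      * rewrite Hd2 by auto. destruct u; qsolve.
Qed.
Module MC.
Import all_boot all_order all_algebra all_classical all_reals all_analysis lra Rstruct Rstruct_topology.
Import Order.TTheory GRing.Theory Num.Theory.
Import numFieldNormedType.Exports.
Local Open Scope classical_set_scope.
Local Open Scope ring_scope.

Lemma cont_sum (K : realType) (T : topologicalType) (I : Type) (s : seq I) (g : I -> T -> K) :
  (forall i, continuous (g i)) -> continuous (fun x => \sum_(i <- s) g i x).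
Proof.
move=> hg; elim: s => [|a s IH].
  rewrite (_ : (fun x => _) = (fun _ => 0)); first exact: cst_continuous.
  by apply: funext => x; rewrite big_nil.
rewrite (_ : (fun x => _) = (fun x => g a x + \sum_(i <- s) g i x)).
  by move=> x; apply: continuousD; [exact: hg|exact: IH].
by apply: funext => x; rewrite big_cons.
Qed.

Lemma evt_rV (K : realType) n (b : 'I_n -> 'I_n -> K) (hn : (0 < n)%N) :
  exists2 y : 'rV[K]_n, \sum_i y ord0 i * y ord0 i = 1 &
  forall z : 'rV[K]_n, \sum_i z ord0 i * z ord0 i = 1 ->
    \sum_i \sum_j b i j * z ord0 i * z ord0 j <= \sum_i \sum_j b i j * y ord0 i * y ord0 j.
Proof.
set S := [set v : 'rV[K]_n | \sum_i v ord0 i * v ord0 i = 1].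
have cN : continuous (fun v : 'rV[K]_n => \sum_i v ord0 i * v ord0 i).
  apply: cont_sum => i v.
  by apply: continuousM; apply: coord_continuous.
have cf : continuous (fun v : 'rV[K]_n => \sum_i \sum_j b i j * v ord0 i * v ord0 j).
  apply: cont_sum => i; apply: cont_sum => j v.
  apply: (continuousM (s:=fun x : 'rV[K]_n => b i j * x ord0 i) (t:=fun x => x ord0 j)); last exact: coord_continuous.
  apply: (continuousM (s:=fun x : 'rV[K]_n => b i j) (t:=fun x => x ord0 i)); last exact: coord_continuous.
  exact: cst_continuous.
have S0 : S !=set0.
  exists (\row_j (if (j == Ordinal hn) then 1 else 0)).
  rewrite /S /= (bigD1 (Ordinal hn)) //= big1 ?mxE ?eqxx; first by rewrite mulr1 addr0.
  by move=> i /negbTE hi; rewrite mxE hi mulr0.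
have cS : compact S.
  apply: (@subclosed_compact _ _ [set v : 'rV[K]_n | forall i, `[-1, 1]%classic (v ord0 i)]).
  - have -> : S = (fun v : 'rV[K]_n => \sum_i v ord0 i * v ord0 i) @^-1` [set 1] by [].
    by move: cN => /continuous_closedP; apply; exact: closed_eq.
  - by apply: (@rV_compact K n (fun=> `[-1, 1]%classic)) => i; exact: segment_compact.
  - move=> v /= Sv i; rewrite /= in_itv /=.
    have : v ord0 i * v ord0 i <= 1.
      rewrite -Sv (bigD1 i) //= lerDl; apply: sumr_ge0 => j _; by rewrite -expr2 sqr_ge0.
    by move=> h; apply/andP; split; nra.
have [c Sc hc] := EVT_max_rV S0 cS (continuous_subspaceT cf).
exists c; first by move: Sc; rewrite inE.
by move=> z Sz; apply: hc; rewrite inE.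
Qed.

Lemma rsum_big n (f : nat -> R) : rsum n f = \sum_(i < n) f i.
Proof. by elim: n => [|n IH] /=; rewrite ?big_ord0 // big_ord_recr /= IH. Qed.

Lemma Qf_big n b z : Qf n b z = \sum_(i < n) \sum_(j < n) b i j * z i * z j.
Proof. by rewrite /Qf rsum_big; apply: eq_bigr => i _; rewrite rsum_big. Qed.

Lemma evt_nat (m : nat) (b : nat -> nat -> R) :
  exists y : nat -> R, rsum m.+1 (fun i => Rmult (y i) (y i)) = 1%R /\
    forall z, rsum m.+1 (fun i => Rmult (z i) (z i)) = 1%R -> Rle (Qf m.+1 b z) (Qf m.+1 b y).
Proof.
have [c Sc hc] := (@evt_rV R _ (fun i j : 'I_m.+1 => b i j) (ltn0Sn m)).
exists (fun k => c ord0 (inord k)); split.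
  by rewrite rsum_big -Sc; apply: eq_bigr => i _; rewrite inord_val.
move=> z hz; apply/RleP.
have hz' : \sum_(i < m.+1) (\row_(i0 < m.+1) z i0) ord0 i * (\row_(i0 < m.+1) z i0) ord0 i = 1.
  by rewrite -hz rsum_big; apply: eq_bigr => i _; rewrite mxE.
rewrite !Qf_big.
have E1 : \sum_(i < m.+1) \sum_(j < m.+1) b i j * z i * z j = \sum_(i < m.+1) \sum_(j < m.+1) b i j * (\row_(i0 < m.+1) z i0) ord0 i * (\row_(i0 < m.+1) z i0) ord0 j.
  by apply: eq_bigr => i _; apply: eq_bigr => j _; rewrite !mxE.
have E2 : \sum_(i < m.+1) \sum_(j < m.+1) b i j * c ord0 (inord i) * c ord0 (inord j) = \sum_(i < m.+1) \sum_(j < m.+1) b i j * c ord0 i * c ord0 j.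
  by apply: eq_bigr => i _; apply: eq_bigr => j _; rewrite !inord_val.
by rewrite E1 E2; apply: hc.
Qed.
End MC.

Lemma Rabs_sq x : Rabs x * Rabs x = x * x.
Proof. rewrite <- Rabs_mult, Rabs_right; [ring|nra]. Qed.

Theorem corollary3p7 (n : nat) (A : qmat) (hn : (1 <= n)%nat)
  (hut : upper_triangular n A) (hnil : nilpotent n A) (hcf : cycle_free n A) :
  exists r : R, 0 <= r /\ forall q : quat, numrange n A q <-> qdisk qzero r q.
Proof.
  destruct n as [|m]; [lia|].
  set (b := fun i j => qnorm (A i j)).
  destruct (MC.evt_nat m b) as [ys [ysu ysmax]].
  set (y0 := fun i => Rabs (ys i)).
  assert (y0u : rsum (S m) (fun i => y0 i * y0 i) = 1).
  { rewrite (rsum_ext _ _ (fun i => ys i * ys i)). exact ysu. intros i _. unfold y0. apply Rabs_sq. }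
  assert (hb : forall i j, 0 <= b i j) by (intros; apply qnorm_ge0).
  assert (Hy0 : Qf (S m) b ys <= Qf (S m) b y0).
  { unfold Qf. apply rsum_le; intros i _. apply rsum_le; intros j _. unfold y0.
    rewrite !Rmult_assoc. apply Rmult_le_compat_l; auto.
    rewrite <- Rabs_mult. apply Rle_abs. }
  exists (Qf (S m) b y0). split.
  { unfold Qf. apply rsum_ge0; intros i _. apply rsum_ge0; intros j _. unfold y0.
    assert (0 <= b i j) by auto. assert (0 <= Rabs (ys i)) by apply Rabs_pos.
    assert (0 <= Rabs (ys j)) by apply Rabs_pos.
    apply Rmult_le_pos; [apply Rmult_le_pos|]; auto. }
  assert (Hsub : forall q, qsub q qzero = q) by (intros q; destruct q; qsolve).
  intros q. unfold qdisk. rewrite Hsub. split.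
  - intros [x [Hx Hq]]. rewrite Hq.
    eapply Rle_trans. apply bound_W. fold b.
    eapply Rle_trans; [|exact Hy0]. apply ysmax. apply unit_abs; auto.
  - intros Hq.
    assert (b00 : b 0%nat 0%nat = 0).
    { unfold b. destruct hcf as [Hloop _].
      destruct (classic (A 0%nat 0%nat = qzero)) as [e|ne].
      - rewrite e; apply qnorm_zero.
      - exfalso. apply (Hloop 0%nat); [lia|left; auto]. }
    destruct (path_value (S m) b ltac:(lia) b00 y0 (fun i => Rabs_pos (ys i)) y0u (qnorm q) (qnorm_ge0 q) Hq)
      as [y [yu yq]].
    destruct (Req_dec (qnorm q) 0) as [e|ne].
    + assert (qz : q = qzero) by (apply Nq_zero_eq; rewrite <- qnorm_sq, e; ring).
      destruct (construct (S m) A hut hcf y qone Nq_one yu) as [x [Hx Hv]].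
      exists x. split; auto. rewrite Hv. fold b. rewrite yq, e, qz. qsolve.
    + assert (hp := qnorm_ge0 q).
      assert (Nu : Nq (qscale (/ qnorm q) q) = 1).
      { rewrite Nq_scale, <- qnorm_sq. field; auto. }
      destruct (construct (S m) A hut hcf y _ Nu yu) as [x [Hx Hv]].
      exists x. split; auto. rewrite Hv. fold b. rewrite yq.
      destruct q; apply quat_eq; simpl; field; auto.
Qed.
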